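(* Let $T\in\mathcal L(\mathcal H)$ be invertible and $C>0$. Let $\mathcal X$ be the set of $x\in\mathcal H$ for which there exist strictly increasing sequences $\{n_k\}_k$ and $\{l_k\}_k$ of positive integers such that the limits $\lim_k\|T^{-l_k}x\|$ and $\lim_k\|T^{n_k}x\|$ exist and $\lim_k\|T^{-l_k}x\|\leq C\lim_k\|T^{n_k}x\|$. If $\mathcal X$ is dense in $\mathcal H$, then $$\sup_{n\geq0}\|T^{-n}\|\leq C\Bigl(\sup_{n\geq0}\|T^n\|\Bigr)^2 .$$
   Context: $\mathcal H$ is a complex Hilbert space. *)

(* Defs.v *)
From HB Require Import structures.
From mathcomp Require Import all_boot all_order all_algebra.
From mathcomp Require Import all_classical all_reals.
From mathcomp Require Import ereal topology normedtype sequences.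
From mathcomp Require Import complex.
Set Implicit Arguments. Unset Strict Implicit. Unset Printing Implicit Defensive.
Import Order.TTheory GRing.Theory Num.Theory numFieldNormedType.Exports.
Local Open Scope classical_set_scope.
Local Open Scope ring_scope.

Definition hnorm (R : realType) (H : lmodType R[i]) (inner : H -> H -> R[i])
  (x : H) : R := Num.sqrt (complex.Re (inner x x)).

Record is_complex_hilbert (R : realType) (H : lmodType R[i])
    (inner : H -> H -> R[i]) : Prop := {
  inner_linear : forall (a : R[i]) (x y z : H),
      inner (a *: x + y) z = a * inner x z + inner y z;
  inner_conj : forall x y : H, inner y x = conjc (inner x y);
  inner_ge0 : forall x : H, 0 <= inner x x;
  inner_eq0 : forall x : H, inner x x = 0 -> x = 0;
  inner_complete : forall u : nat -> H,
      (forall e : R, 0 < e -> exists N : nat, forall m n : nat,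
          (N <= m)%N -> (N <= n)%N -> hnorm inner (u m - u n) < e) ->
      exists l : H, forall e : R, 0 < e -> exists N : nat, forall n : nat,
          (N <= n)%N -> hnorm inner (u n - l) < e
}.

Definition bounded_linear (R : realType) (H : lmodType R[i])
  (inner : H -> H -> R[i]) (T : H -> H) : Prop :=
  (forall (a : R[i]) (x y : H), T (a *: x + y) = a *: T x + T y) /\
  exists M : R, forall x : H, hnorm inner (T x) <= M * hnorm inner x.

(* Operator norm, as an extended real (it is finite for bounded T). *)
Definition opnorm (R : realType) (H : lmodType R[i])
  (inner : H -> H -> R[i]) (T : H -> H) : \bar R :=
  ereal_sup [set (hnorm inner (T x))%:E | x in [set x | hnorm inner x <= 1]].

Definition hdense (R : realType) (H : lmodType R[i])
  (inner : H -> H -> R[i]) (X : set H) : Prop :=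
  forall (y : H) (e : R), 0 < e ->
    exists2 x, X x & hnorm inner (x - y) < e.

(* The set X of the statement; S is T^{-1}, so T^{-l} = iter l S. *)
Definition Xset (R : realType) (H : lmodType R[i])
  (inner : H -> H -> R[i]) (T S : H -> H) (C : R) : set H :=
  [set x | exists (n l : nat -> nat),
     [/\ (forall k, 0 < n k)%N, (forall k, 0 < l k)%N,
         (forall k, n k < n k.+1)%N, (forall k, l k < l k.+1)%N &
         exists a b : R,
           [/\ (fun k => hnorm inner (iter (l k) S x)) @ \oo --> a,
               (fun k => hnorm inner (iter (n k) T x)) @ \oo --> b &
               a <= C * b]]].

(* Main.v *)
Require Import Defs.
From HB Require Import structures.
From mathcomp Require Import all_boot all_order all_algebra.
From mathcomp Require Import all_classical all_reals.
From mathcomp Require Import ereal topology normedtype sequences.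
From mathcomp Require Import complex.
From mathcomp Require Import ring lra.
Import Order.TTheory GRing.Theory Num.Theory numFieldNormedType.Exports.
Local Open Scope classical_set_scope.
Local Open Scope ring_scope.

Set Implicit Arguments.
Unset Strict Implicit.
Section Hilb.
Variables (R : realType) (H : lmodType R[i]) (inner : H -> H -> R[i]).
Hypothesis hH : is_complex_hilbert inner.

Definition P (x y : H) : R := complex.Re (inner x y).

Lemma Re_rmul (a : R) (w : R[i]) : complex.Re (real_complex R a * w) = a * complex.Re w.
Proof. by case: w => r s /=; rewrite mul0r subr0. Qed.

Lemma Re_conj (w : R[i]) : complex.Re (conjc w) = complex.Re w.
Proof. by case: w. Qed.

Lemma inner0l z : inner 0 z = 0.
Proof.
have := inner_linear hH 1 0 0 z; rewrite scaler0 addr0 mul1r => h.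
by apply: (@addrI _ (inner 0 z)); rewrite addr0 -h.
Qed.

Lemma P_lin (a : R) x y z : P (real_complex R a *: x + y) z = a * P x z + P y z.
Proof. by rewrite /P (inner_linear hH) raddfD /= Re_rmul. Qed.

Lemma P_sym x y : P x y = P y x.
Proof. by rewrite /P (inner_conj hH x y) Re_conj. Qed.

Lemma P0l z : P 0 z = 0.
Proof. by rewrite /P inner0l. Qed.

Lemma P_scale (a : R) x z : P (real_complex R a *: x) z = a * P x z.
Proof. by rewrite -[_ *: x]addr0 P_lin P0l addr0. Qed.

Lemma P_add x y z : P (x + y) z = P x z + P y z.
Proof. by rewrite -[x in LHS]scale1r P_lin mul1r. Qed.

Lemma P_ge0 x : 0 <= P x x.
Proof. by have := inner_ge0 hH x; rewrite lecE => /andP[_]. Qed.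

Lemma P_eq0 x : P x x = 0 -> x = 0.
Proof.
move=> h; apply: (inner_eq0 hH).
have := inner_ge0 hH x; rewrite lecE => /andP[/eqP hi _].
move: h; rewrite /P; case: (inner x x) hi => r s /= -> ->; done.
Qed.

Lemma hnorm_ge0 x : 0 <= hnorm inner x.
Proof. exact: sqrtr_ge0. Qed.

Lemma hnorm_sq x : hnorm inner x ^+ 2 = P x x.
Proof. by rewrite /hnorm sqr_sqrtr // P_ge0. Qed.

Lemma hnorm0 : hnorm inner 0 = 0.
Proof. by rewrite /hnorm -/(P 0 0) P0l sqrtr0. Qed.

Lemma P_addr x y z : P z (x + y) = P z x + P z y.
Proof. by rewrite P_sym P_add P_sym [P y z]P_sym. Qed.

Lemma P_scaler (a : R) x z : P z (real_complex R a *: x) = a * P z x.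
Proof. by rewrite P_sym P_scale P_sym. Qed.

Lemma P_quad (a b : R) x y :
  P (real_complex R a *: x + real_complex R b *: y) (real_complex R a *: x + real_complex R b *: y)
  = a ^+ 2 * P x x + 2 * a * b * P x y + b ^+ 2 * P y y.
Proof.
rewrite !(P_add, P_addr, P_scale, P_scaler) [P y x]P_sym. ring.
Qed.

Lemma hnorm_scale (a : R) x : hnorm inner (real_complex R a *: x) = `|a| * hnorm inner x.
Proof.
rewrite /hnorm -!/(P _ _) -[_ *: x]addr0 -(scale0r x) -[(0 : R[i])]/(real_complex R 0).
rewrite P_quad expr0n /= mul0r mulr0 !addr0 mul0r addr0.
by rewrite sqrtrM ?sqrtr_sqr // sqr_ge0.
Qed.

Lemma CS x y : P x y <= hnorm inner x * hnorm inner y.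
Proof.
have [hx0|hxp] := eqVneq (hnorm inner x) 0.
  have : P x x = 0.
  by rewrite -hnorm_sq; apply/eqP; rewrite sqrf_eq0; apply/eqP.
  by move/P_eq0 => ->; rewrite P0l hnorm0 mul0r.
have hx : 0 < hnorm inner x by rewrite lt_def hxp hnorm_ge0.
have [hy0|hyp] := eqVneq (hnorm inner y) 0.
  have : P y y = 0.
  by rewrite -hnorm_sq; apply/eqP; rewrite sqrf_eq0; apply/eqP.
  by move/P_eq0 => ->; rewrite P_sym P0l hnorm0 mulr0.
have hy' : 0 < hnorm inner y by rewrite lt_def hyp hnorm_ge0.
set t := hnorm inner y / hnorm inner x.
have ht : t * hnorm inner x = hnorm inner y by rewrite /t divfK.
have := P_ge0 (real_complex R t *: x + real_complex R (-1) *: y).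
rewrite P_quad -!hnorm_sq => h.
have hy := hnorm_ge0 y.
have ht0 : 0 <= t by rewrite /t divr_ge0 // ltW.
have htp : 0 < t by rewrite /t divr_gt0.
rewrite -ht; rewrite -ht in h.
have : t * P x y <= t * (hnorm inner x * (t * hnorm inner x)) by nra.
by rewrite ler_pM2l.
Qed.

Lemma hnorm_triangle x y : hnorm inner (x + y) <= hnorm inner x + hnorm inner y.
Proof.
have h1 := hnorm_ge0 x; have h2 := hnorm_ge0 y; have h3 := hnorm_ge0 (x + y).
rewrite -ler_sqr ?nnegrE ?addr_ge0 //.
have e := P_quad 1 1 x y.
rewrite (_ : real_complex R 1 = 1) // !scale1r in e.
rewrite hnorm_sq e -!hnorm_sq.
have := CS x y. nra.
Qed.

Lemma hnormN x : hnorm inner (- x) = hnorm inner x.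
Proof.
rewrite -scaleN1r (_ : (-1 : R[i]) = real_complex R (-1)).
  by rewrite hnorm_scale normrN normr1 mul1r.
by apply/eqP; rewrite eq_complex /= oppr0 !eqxx.
Qed.


Definition Lin (f : H -> H) := forall (a : R[i]) x y, f (a *: x + y) = a *: f x + f y.

Lemma lin_iter f n : Lin f -> Lin (iter n f).
Proof.
move=> hf; elim: n => [|n IH] a x y //=.
by rewrite IH hf.
Qed.

Lemma lin0 f : Lin f -> f 0 = 0.
Proof.
move=> hf; have := hf 1 0 0; rewrite scaler0 addr0 scale1r => h.
by apply: (@addrI _ (f 0)); rewrite addr0 -h.
Qed.

Lemma linB f x y : Lin f -> f (x - y) = f x - f y.
Proof. by move=> hf; rewrite addrC -scaleN1r hf scaleN1r addrC. Qed.

Lemma linZ f a x : Lin f -> f (a *: x) = a *: f x.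
Proof. by move=> hf; rewrite -[_ *: x]addr0 hf lin0 // addr0. Qed.

Lemma hnorm_eq0 {x} : hnorm inner x = 0 -> x = 0.
Proof.
move=> h; apply: P_eq0.
by rewrite -hnorm_sq; apply/eqP; rewrite sqrf_eq0; apply/eqP.
Qed.

Lemma opnorm_ge0 f : (0 <= opnorm inner f)%E.
Proof.
have h : [set (hnorm inner (f x))%:E | x in [set x | hnorm inner x <= 1]]
           (hnorm inner (f 0))%:E by exists 0 => //=; rewrite hnorm0 ler01.
by apply: le_trans (ereal_sup_ubound h); rewrite lee_fin hnorm_ge0.
Qed.

Lemma opnorm_bound f (M : R) : Lin f -> (opnorm inner f <= M%:E)%E ->
  forall x, hnorm inner (f x) <= M * hnorm inner x.
Proof.
move=> hf hM x.
have [hx0|hxp] := eqVneq (hnorm inner x) 0.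
  have M0 : 0 <= M.
    rewrite -lee_fin; exact: le_trans (opnorm_ge0 f) hM.
  by rewrite (hnorm_eq0 hx0 : x = 0) lin0 // hnorm0 mulr_ge0 // hnorm_ge0.
have hx : 0 < hnorm inner x by rewrite lt_def hxp hnorm_ge0.
set y := real_complex R (hnorm inner x)^-1 *: x.
have hy : hnorm inner y = 1.
  by rewrite /y hnorm_scale gtr0_norm ?invr_gt0 // mulVf.
have : ((hnorm inner (f y))%:E <= opnorm inner f)%E.
  by apply: ereal_sup_ubound; exists y => //=; rewrite hy.
move=> /le_trans /(_ hM); rewrite lee_fin /y linZ // hnorm_scale.
by rewrite gtr0_norm ?invr_gt0 // mulrC ler_pdivrMr.
Qed.

Lemma iter_bound f n : (exists B, forall x, hnorm inner (f x) <= B * hnorm inner x) ->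
  exists B, 0 <= B /\ forall x, hnorm inner (iter n f x) <= B * hnorm inner x.
Proof.
case=> B hB; elim: n => [|n [B' [hB'0 IH]]].
  by exists 1; split => // x /=; rewrite mul1r.
exists (`|B| * B'); split; first by rewrite mulr_ge0.
move=> x /=; apply: (le_trans (hB _)).
apply: (le_trans (ler_wpM2r (hnorm_ge0 _) (ler_norm B))).
by rewrite -mulrA ler_wpM2l.
Qed.

Lemma iter_cancel (T S : H -> H) (hTS : cancel S T) j z : iter j T (iter j S z) = z.
Proof.
elim: j z => [|j IH] z //.
by rewrite iterSr iterS hTS IH.
Qed.

Lemma incr_ge (l : nat -> nat) : (forall k, l k < l k.+1)%N -> forall k, (k <= l k)%N.
Proof.
move=> hl; elim=> [|k IH] //; exact: leq_ltn_trans IH (hl k).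
Qed.

Lemma dense_ext (X : set H) g (K B : R) : hdense inner X -> Lin g -> 0 <= K -> 0 <= B ->
  (forall z, hnorm inner (g z) <= B * hnorm inner z) ->
  (forall x, X x -> hnorm inner (g x) <= K * hnorm inner x) ->
  forall y, hnorm inner (g y) <= K * hnorm inner y.
Proof.
move=> hX hg K0 B0 hB hK y.
apply/ler_addgt0Pr => e e0.
have kb : 0 < K + B + 1 by lra.
have d0 : 0 < e / (K + B + 1) by rewrite divr_gt0.
have [x Xx hxy] := hX y _ d0.
have e1 : g y = g x - g (x - y) by rewrite linB // opprB addrC subrK.
rewrite e1; apply: (le_trans (hnorm_triangle _ _)); rewrite hnormN.
have h1 := hK x Xx. have h2 := hB (x - y).
have h3 : hnorm inner x <= hnorm inner y + hnorm inner (x - y).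
  by rewrite -{1}(subrK y x) addrC hnorm_triangle.
have h4 : (K + B) * (e / (K + B + 1)) <= e.
  rewrite mulrA ler_pdivrMr //. nra.
set d := e / (K + B + 1) in d0 hxy h4.
have := hnorm_ge0 (x - y). nra.
Qed.

End Hilb.
Unset Implicit Arguments.
Set Strict Implicit.

Theorem proposition4p4 (R : realType) (H : lmodType R[i])
  (inner : H -> H -> R[i]) (hH : is_complex_hilbert inner)
  (T S : H -> H)
  (hT : bounded_linear inner T) (hS : bounded_linear inner S)
  (hST : cancel T S) (hTS : cancel S T)
  (C : R) (hC : 0 < C) :
  hdense inner (Xset inner T S C) ->
  (ereal_sup [set opnorm inner (iter n S) | n in [set: nat]] <=
   C%:E * (ereal_sup [set opnorm inner (iter n T) | n in [set: nat]] *
           ereal_sup [set opnorm inner (iter n T) | n in [set: nat]]))%E.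
Proof.
move=> hX.
have MT0 : (0 <= ereal_sup [set opnorm inner (iter n T) | n in [set: nat]])%E.
  apply: le_trans (opnorm_ge0 hH (iter 0 T)) _.
  by apply: ereal_sup_ubound; exists 0%N.
case eM: (ereal_sup _) MT0 => [M| |] MT0; last by [].
  2: by rewrite mulyy gt0_muley ?lte_fin // leey.
have M0 : 0 <= M by rewrite -lee_fin.
have LT : Lin T by case: hT.
have LS : Lin S by case: hS.
have hTb : forall n x, hnorm inner (iter n T x) <= M * hnorm inner x.
  move=> n; apply: (opnorm_bound hH (lin_iter n LT)); rewrite -eM.
  by apply: ereal_sup_ubound; exists n.
rewrite -!EFinM.
apply: ge_ereal_sup => _ [m _ <-].
have [B [B0 hB]] := iter_bound m (proj2 hS).
have key : forall x, hnorm inner (iter m S x) <= C * (M * M) * hnorm inner x.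
  apply: (dense_ext hH hX (lin_iter m LS) _ B0 hB); first by rewrite mulr_ge0 ?mulr_ge0 // ltW.
  move=> x [n [l [hn hl hni hli [a [b [ha hb hab]]]]]].
  have hlk := incr_ge hli.
  have h1 : hnorm inner (iter m S x) <= M * a.
    apply: (cvgr_to_ge (@cvgMl_tmp _ _ _ _ _ M _ ha)).
    near=> k.
    have hk : (m <= l k)%N by apply: leq_trans (hlk k); near: k; exists m.
    rewrite -(subnK hk) iterD.
    rewrite -{1}(iter_cancel hTS (l k - m) (iter m S x)).
    exact: hTb.
  have h2 : b <= M * hnorm inner x.
    apply: (cvgr_to_le hb); apply: nearW => k; exact: hTb.
  have ha0 : 0 <= a.
    apply: (cvgr_to_ge ha); apply: nearW => k; exact: (hnorm_ge0 inner).
  apply: (le_trans h1).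
  have e1 : M * a <= M * (C * b) by rewrite ler_wpM2l.
  have e2 : C * b <= C * (M * hnorm inner x) by rewrite ler_wpM2l // ltW.
  have e3 : M * (C * b) <= M * (C * (M * hnorm inner x)) by rewrite ler_wpM2l.
  apply: (le_trans e1); apply: (le_trans e3).
  by rewrite !mulrA [M * C]mulrC.
apply: ge_ereal_sup => _ [x hx <-]; rewrite lee_fin.
apply: (le_trans (key x)).
rewrite -[X in _ <= X]mulr1 ler_wpM2l // mulr_ge0 ?mulr_ge0 // ltW.
Unshelve. all: by end_near.
Qed.
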